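(* Let $\bar A=\{A_i\}$ be a partition with $A_i\in(P_i,Q_i)$ such that every $A_i$ satisfies the short cycle property, i.e. $T_iA_i\in(Q_{\rho(i)},A_{\rho(i)+1})$ and $T_{i-1}A_i\in(A_{\theta(i-1)},P_{\theta(i-1)+1})$. Put $B_i=T_{\sigma(i-1)}A_{\sigma(i-1)}$ and $C_i=T_{\sigma(i+1)}A_{\sigma(i+1)+1}$. Then for indices $i,j$ related by $\sigma(j+1)=\sigma(i-1)-1$, \[ T_jC_j=T_iB_i\in[B_{\rho(i)+1},C_{\theta(i)}]=[B_{\rho(j)},C_{\theta(j)-1}]. \]
   Context: Setting. Fix $g\ge 2$; indices are mod $8g-4$. Let $\mathcal F$ be the regular hyperbolic $(8g-4)$-gon in the unit disk centered at $0$ with all interior angles $\pi/2$, sides labeled $1,\dots,8g-4$ counterclockwise, side $i$ joining vertices $V_i$ and $V_{i+1}$. The complete geodesic extending side $i$ goes from $P_i$ (beyond $V_i$) to $Q_{i+1}$ (beyond $V_{i+1}$) on the unit circle; counterclockwise order $P_1,Q_1,P_2,Q_2,\dots,P_{8g-4},Q_{8g-4}$. $\sigma(i)=4g-i$ ($i$ odd), $\sigma(i)=2-i$ ($i$ even), $\rho(i)=\sigma(i)+1$, $\theta(i)=\sigma(i)-1$. $T_i$ is the Möbius transformation mapping side $i$ onto side $\sigma(i)$, with isometric circle the geodesic $P_iQ_{i+1}$, mapped onto the geodesic $Q_{\sigma(i)+1}P_{\sigma(i)}$, inside to outside. Arcs $[A,B]$ etc. are counterclockwise from $A$ to $B$.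 *)

(* Defs.v *)
(* concrete reals R, points of the plane as R * R
   (x, y) <-> x + i y in the complex plane. *)
From Stdlib Require Import Reals ZArith Lra.
Open Scope R_scope.

Definition point := (R * R)%type.

Definition rot (t : R) (p : point) : point :=
  (cos t * fst p - sin t * snd p, sin t * fst p + cos t * snd p).

(** Number of sides N = 8g - 4 (as an integer and as a real). *)
Definition Nz (g : Z) : Z := (8 * g - 4)%Z.
Definition Nr (g : Z) : R := IZR (Nz g).

(** Index maps (indices are integers, read mod N; all maps below are
    compatible with reduction mod N since N is even). *)
Definition sigma (g i : Z) : Z := if Z.odd i then (4 * g - i)%Z else (2 - i)%Z.
Definition rho (g i : Z) : Z := (sigma g i + 1)%Z.
Definition theta (g i : Z) : Z := (sigma g i - 1)%Z.

(** Geometry of the regular N-gon with right angles centred at 0.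
    Side i lies on the geodesic (circle orthogonal to the unit circle)
    whose Euclidean centre lies in the direction phi i = 2 pi i / N.
    With cos(beta) = sqrt(cos(2 pi/N)), sin(beta) = sqrt(1 - cos(2pi/N)),
    the centre is at distance 1/cos(beta), radius tan(beta); adjacent such
    circles meet orthogonally (interior angles pi/2). *)
Definition phi (g i : Z) : R := 2 * PI * IZR i / Nr g.
Definition cb (g : Z) : R := sqrt (cos (2 * PI / Nr g)).
Definition sb (g : Z) : R := sqrt (1 - cos (2 * PI / Nr g)).

(** Endpoints of the geodesic extending side i: P_i (beyond V_i) and
    Q_{i+1} (beyond V_{i+1}); hence Q_i is the endpoint of side i-1. *)
Definition Ppt (g i : Z) : point := rot (phi g i) (cb g, - sb g).
Definition Qpt (g i : Z) : point := rot (phi g (i - 1)) (cb g, sb g).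

(** Isometric circle of T_i: the geodesic P_i Q_{i+1}. *)
Definition icenter (g i : Z) : point := rot (phi g i) (/ cb g, 0).
Definition iradius (g : Z) : R := sb g / cb g.

Definition inversion (c : point) (r : R) (z : point) : point :=
  let dx := fst z - fst c in
  let dy := snd z - snd c in
  let k := r ^ 2 / (dx ^ 2 + dy ^ 2) in
  (fst c + k * dx, snd c + k * dy).

Definition reflection (psi : R) (z : point) : point :=
  (cos (2 * psi) * fst z + sin (2 * psi) * snd z,
   sin (2 * psi) * fst z - cos (2 * psi) * snd z).

(** T_i : the (orientation-preserving) Moebius transformation of the disk
    with isometric circle P_i Q_{i+1}, mapping side i onto side sigma(i):
    inversion in its isometric circle followed by the reflection in the
    line through 0 bisecting the directions of sides i and sigma(i).
    It maps P_i to Q_{sigma(i)+1} and Q_{i+1} to P_{sigma(i)}. *)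
Definition T (g i : Z) (z : point) : point :=
  reflection ((phi g i + phi g (sigma g i)) / 2)
             (inversion (icenter g i) (iradius g) z).

Definition in_oarc (A B x : point) : Prop :=
  exists t, 0 < t <= 2 * PI /\ B = rot t A /\
    exists s, 0 < s < t /\ x = rot s A.

Definition in_carc (A B x : point) : Prop :=
  exists t, 0 <= t < 2 * PI /\ B = rot t A /\
    exists s, 0 <= s <= t /\ x = rot s A.

(* Main.v *)
From Stdlib Require Import Reals ZArith Lra Lia Field.
From Coquelicot Require Import Complex.
Require Import Defs.
Open Scope R_scope.


Definition a (g : Z) : R := 2 * PI / Nr g.
Definition e (t : R) : point := (cos t, sin t).
Definition cr (u v : point) : R := fst u * snd v - snd u * fst v.
Definition orient (u v w : point) : R := cr u v + cr v w + cr w u.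
Definition unit (z : point) : Prop := fst z * fst z + snd z * snd z = 1.
Definition cc (g : Z) : R := / cb g.
Definition S (g : Z) (z : point) : point :=
  let w := inversion (cc g, 0) (iradius g) z in (fst w, - snd w).
Definition bet (g : Z) : R := acos (cb g).

Lemma Nr_ge g : (2 <= g)%Z -> 12 <= Nr g.
Proof. intro H. unfold Nr, Nz. apply IZR_le. lia. Qed.

Lemma a_bounds g : (2 <= g)%Z -> 0 < a g /\ a g <= PI / 6.
Proof.
  intro H. pose proof (Nr_ge g H). pose proof PI_RGT_0. unfold a. split.
  - apply Rdiv_lt_0_compat; lra.
  - apply Rmult_le_reg_r with (Nr g); [lra|]. field_simplify; try lra.
    apply Rmult_le_reg_r with 6; [lra|]. field_simplify; nra.
Qed.

Lemma phi_a g i : (2 <= g)%Z -> phi g i = IZR i * a g.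
Proof. intro H. pose proof (Nr_ge g H). unfold phi, a. field. lra. Qed.

Lemma Na g : (2 <= g)%Z -> IZR (Nz g) * a g = 2 * PI.
Proof. intro H. pose proof (Nr_ge g H). unfold a, Nr in *. field. lra. Qed.

Lemma cosa_bounds g : (2 <= g)%Z -> 0 < cos (a g) < 1 /\ 0 < sin (a g).
Proof.
  intro H. destruct (a_bounds g H). pose proof PI_RGT_0. split; [split|].
  - apply cos_gt_0; lra.
  - rewrite <- cos_0. apply cos_decreasing_1; lra.
  - apply sin_gt_0; lra.
Qed.

Lemma cb_facts g : (2 <= g)%Z ->
  cb g * cb g = cos (a g) /\ 0 < cb g /\ cb g < 1 /\
  sb g * sb g = 1 - cos (a g) /\ 0 < sb g.
Proof.
  intro H. destruct (cosa_bounds g H) as [[H1 H2] H3].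
  unfold cb, sb. fold (a g).
  assert (E1 := sqrt_sqrt (cos (a g)) ltac:(lra)).
  assert (E2 := sqrt_sqrt (1 - cos (a g)) ltac:(lra)).
  assert (P1 := sqrt_lt_R0 (cos (a g)) H1).
  assert (P2 := sqrt_lt_R0 (1 - cos (a g)) ltac:(lra)).
  repeat split; try lra. nra.
Qed.

Lemma cc_facts g : (2 <= g)%Z -> 1 < cc g /\ iradius g * iradius g = cc g * cc g - 1
  /\ cc g * cc g * cos (a g) = 1.
Proof.
  intro H. destruct (cb_facts g H) as (E1 & P1 & L1 & E2 & P2).
  unfold cc, iradius. split; [|split].
  - rewrite <- Rinv_1. apply Rinv_lt_contravar; lra.
  - replace (sb g / cb g * (sb g / cb g)) with (sb g * sb g / (cb g * cb g)) by (field; lra).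
    replace (/ cb g * / cb g - 1) with (1 / (cb g * cb g) - 1) by (field; lra).
    rewrite E2, E1. destruct (cosa_bounds g H) as [[? ?] ?]. field. lra.
  - rewrite <- E1. field. lra.
Qed.

Lemma bet_facts g : (2 <= g)%Z ->
  cos (bet g) = cb g /\ sin (bet g) = sb g /\ a g / 2 < bet g < a g.
Proof.
  intro H. destruct (cb_facts g H) as (E1 & P1 & L1 & E2 & P2).
  destruct (a_bounds g H). pose proof PI_RGT_0.
  destruct (cosa_bounds g H) as [[Hc1 Hc2] Hc3].
  unfold bet.
  assert (C : cos (acos (cb g)) = cb g) by (apply cos_acos; lra).
  assert (B := acos_bound (cb g)).
  split; [exact C|split].
  - rewrite sin_acos by lra. unfold Rsqr. rewrite E1. unfold sb. reflexivity.
  - split.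
    + destruct (Rlt_or_le (a g / 2) (acos (cb g))) as [h|h]; [exact h|exfalso].
      assert (H4 : cos (a g / 2) <= cos (acos (cb g))).
      { destruct (Req_dec (a g / 2) (acos (cb g))) as [q|q]; [rewrite q; lra|].
        left. apply cos_decreasing_1; lra. }
      rewrite C in H4.
      assert (H5' : cos (a g) = 2 * cos (a g / 2) * cos (a g / 2) - 1).
      { replace (a g) with (2 * (a g / 2)) at 1 by field. rewrite cos_2a. 
        pose proof (sin2_cos2 (a g / 2)) as H5. unfold Rsqr in H5. nra. }
      assert (0 < cos (a g / 2)) by (apply cos_gt_0; lra).
      assert (cos (a g / 2) <= 1) by apply COS_bound.
      assert (cos (a g / 2) < 1).
      { rewrite <- cos_0. apply cos_decreasing_1; lra. }
      nra.
    + destruct (Rlt_or_le (acos (cb g)) (a g)) as [h|h]; [exact h|exfalso].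
      assert (H4 : cos (acos (cb g)) <= cos (a g)).
      { destruct (Req_dec (a g) (acos (cb g))) as [q|q]; [rewrite q; lra|].
        left. apply cos_decreasing_1; lra. }
      rewrite C in H4. nra.
Qed.

Lemma pair_eq (x y u v : R) : x = u -> y = v -> (x, y) = (u, v).
Proof. intros -> ->; reflexivity. Qed.

Lemma e_rot t th : rot t (e th) = e (th + t).
Proof. unfold rot, e; simpl. apply pair_eq; rewrite ?cos_plus, ?sin_plus; ring. Qed.

Lemma rot_rot s t z : rot s (rot t z) = rot (s + t) z.
Proof. destruct z as [x y]. unfold rot; simpl. apply pair_eq; rewrite ?cos_plus, ?sin_plus; ring. Qed.

Lemma rot_0 z : rot 0 z = z.
Proof. destruct z as [x y]. unfold rot; simpl. rewrite cos_0, sin_0. apply pair_eq; ring. Qed.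

Lemma rot_2PI t z : rot (t + 2 * PI) z = rot t z.
Proof.
  destruct z. unfold rot. simpl.
  rewrite cos_plus, sin_plus, cos_2PI, sin_2PI. apply pair_eq; ring.
Qed.

Lemma e_2PI t : e (t + 2 * PI) = e t.
Proof. unfold e. rewrite cos_plus, sin_plus, cos_2PI, sin_2PI. apply pair_eq; ring. Qed.

Lemma e_nat t (n : nat) : e (t + 2 * PI * INR n) = e t.
Proof.
  induction n as [|n IH].
  - simpl. f_equal. ring.
  - rewrite S_INR. replace (t + 2 * PI * (INR n + 1)) with ((t + 2 * PI * INR n) + 2 * PI) by ring.
    rewrite e_2PI. exact IH.
Qed.

Lemma e_Z t (k : Z) : e (t + 2 * PI * IZR k) = e t.
Proof.
  destruct (Z_le_gt_dec 0 k) as [h|h].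
  - rewrite <- (Z2Nat.id k h). rewrite <- INR_IZR_INZ. apply e_nat.
  - assert (k = - Z.of_nat (Z.to_nat (- k)))%Z by lia.
    rewrite H, opp_IZR, <- INR_IZR_INZ.
    rewrite <- (e_nat (t + 2 * PI * - INR (Z.to_nat (- k))) (Z.to_nat (-k))). f_equal. ring.
Qed.

Lemma e_unit t : unit (e t).
Proof. unfold unit, e; simpl. pose proof (sin2_cos2 t). unfold Rsqr in H. lra. Qed.

Lemma unit_e z : unit z -> exists t, z = e t.
Proof.
  destruct z as [x y]. unfold unit; simpl. intro H.
  assert (Hx : -1 <= x <= 1) by nra.
  assert (Hs : sqrt (1 - Rsqr x) = Rabs y).
  { rewrite <- sqrt_Rsqr_abs. f_equal. unfold Rsqr. lra. }
  destruct (Rle_or_lt 0 y) as [hy|hy].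
  - exists (acos x). unfold e. rewrite cos_acos by lra. rewrite sin_acos by lra.
    rewrite Hs, Rabs_pos_eq by lra. reflexivity.
  - exists (- acos x). unfold e. rewrite cos_neg, sin_neg, cos_acos by lra. rewrite sin_acos by lra.
    rewrite Hs, Rabs_left by lra. f_equal. ring.
Qed.

Lemma e_inj_small u v : e u = e v -> -(2 * PI) < u - v < 2 * PI -> u = v.
Proof.
  unfold e. intros H B. inversion H as [[Hc Hs]].
  pose proof PI_RGT_0.
  assert (C : cos (u - v) = 1).
  { rewrite cos_minus, Hc, Hs. pose proof (sin2_cos2 v) as Q. unfold Rsqr in Q. lra. }
  assert (Hh : sin ((u - v) / 2) = 0).
  { assert (cos (u - v) = 1 - 2 * sin ((u - v)/2) * sin ((u - v)/2)).
    { replace (u - v) with (2 * ((u - v) / 2)) at 1 by field. rewrite cos_2a_sin. ring. }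
    nra. }
  destruct (Rtotal_order (u - v) 0) as [l|[q|l]].
  - exfalso. assert (0 < sin (- ((u - v) / 2))) by (apply sin_gt_0; lra).
    rewrite sin_neg in H1. lra.
  - lra.
  - exfalso. assert (0 < sin ((u - v) / 2)) by (apply sin_gt_0; lra). lra.
Qed.

Lemma orient_e u v w :
  orient (e u) (e v) (e w) = 4 * sin ((v - u) / 2) * sin ((w - v) / 2) * sin ((w - u) / 2).
Proof.
  unfold orient, cr, e; simpl.
  set (x := (v - u) / 2). set (y := (w - v) / 2).
  replace ((w - u) / 2) with (x + y) by (unfold x, y; field).
  replace (cos u * sin v - sin u * cos v) with (sin (v - u)) by (rewrite sin_minus; ring).
  replace (cos v * sin w - sin v * cos w) with (sin (w - v)) by (rewrite sin_minus; ring).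
  replace (cos w * sin u - sin w * cos u) with (- sin (w - u)) by (rewrite sin_minus; ring).
  replace (v - u) with (2 * x) by (unfold x; field).
  replace (w - v) with (2 * y) by (unfold y; field).
  replace (w - u) with (2 * x + 2 * y) by (unfold x, y; field).
  rewrite sin_plus, !sin_2a, !cos_2a, sin_plus.
  pose proof (sin2_cos2 x). pose proof (sin2_cos2 y). unfold Rsqr in *.
  set (sx := sin x) in *. set (cx := cos x) in *. set (sy := sin y) in *. set (cy := cos y) in *.
  replace (2 * sx * cx) with (2 * sx * cx * (sy * sy + cy * cy)) at 1 by (rewrite H0; ring).
  replace (2 * sy * cy) with (2 * sy * cy * (sx * sx + cx * cx)) at 1 by (rewrite H; ring).
  ring.
Qed.

Lemma orient_pos u v w : u < v -> v < w -> w < u + 2 * PI -> 0 < orient (e u) (e v) (e w).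
Proof.
  intros. rewrite orient_e. pose proof PI_RGT_0.
  assert (0 < sin ((v - u) / 2)) by (apply sin_gt_0; lra).
  assert (0 < sin ((w - v) / 2)) by (apply sin_gt_0; lra).
  assert (0 < sin ((w - u) / 2)) by (apply sin_gt_0; lra).
  assert (0 < sin ((v - u) / 2) * sin ((w - v) / 2)) by (apply Rmult_lt_0_compat; lra).
  assert (0 < sin ((v - u) / 2) * sin ((w - v) / 2) * sin ((w - u) / 2)) by (apply Rmult_lt_0_compat; lra).
  lra.
Qed.

Lemma normalize t0 p : exists t, e t = e t0 /\ p <= t < p + 2 * PI.
Proof.
  pose proof PI_RGT_0.
  set (q := (t0 - p) / (2 * PI)).
  destruct (archimed q) as [h1 h2].
  exists (t0 - 2 * PI * (IZR (up q) - 1)).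
  split.
  - replace (t0 - 2 * PI * (IZR (up q) - 1)) with (t0 + 2 * PI * IZR (- (up q - 1))) by (rewrite opp_IZR, minus_IZR; ring).
    apply e_Z.
  - assert (t0 - p = 2 * PI * q) by (unfold q; field; lra).
    split; nra.
Qed.

Lemma orient_angle z p1 p2 :
  unit z -> 0 < orient (e p1) z (e p2) -> 0 < p2 - p1 < 2 * PI ->
  exists p, z = e p /\ p1 < p < p2.
Proof.
  intros U O B. destruct (unit_e z U) as [t0 ->].
  destruct (normalize t0 p1) as [t [Et Bt]]. rewrite <- Et in *. exists t. split; [reflexivity|].
  rewrite orient_e in O. pose proof PI_RGT_0.
  assert (0 <= sin ((t - p1) / 2)) by (apply sin_ge_0; lra).
  assert (0 < sin ((p2 - p1) / 2)) by (apply sin_gt_0; lra).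
  assert (t <> p1).
  { intro E. rewrite E in O. replace ((p1 - p1) / 2) with 0 in O by field. rewrite sin_0 in O. lra. }
  assert (0 < sin ((t - p1) / 2)) by (apply sin_gt_0; lra).
  split; [lra|].
  destruct (Rlt_or_le t p2) as [h|h]; [exact h|exfalso].
  assert (sin ((p2 - t) / 2) <= 0).
  { destruct (Req_dec t p2) as [E|E].
    - rewrite E. replace ((p2 - p2) / 2) with 0 by field. rewrite sin_0. lra.
    - assert (0 < sin (- ((p2 - t) / 2))) by (apply sin_gt_0; lra). rewrite sin_neg in H4. lra. }
  assert (0 < sin ((t - p1) / 2) * sin ((p2 - p1) / 2)) by (apply Rmult_lt_0_compat; lra).
  assert (sin ((p2 - t) / 2) * (sin ((t - p1) / 2) * sin ((p2 - p1) / 2)) <= 0).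
  { nra. }
  nra.
Qed.

Lemma oarc_angle al ga x :
  in_oarc (e al) (e ga) x -> 0 < ga - al < 2 * PI -> exists t, x = e t /\ al < t < ga.
Proof.
  intros [t [Bt [Et [s [Bs Es]]]]] B.
  rewrite e_rot in Et, Es.
  assert (ga = al + t) by (apply e_inj_small; [exact Et | lra]).
  exists (al + s). split; [exact Es | lra].
Qed.

Lemma carc_angle b c t : b <= t <= c -> c < b + 2 * PI -> in_carc (e b) (e c) (e t).
Proof.
  intros. exists (c - b). split; [lra|]. split.
  - rewrite e_rot. f_equal. ring.
  - exists (t - b). split; [lra|]. rewrite e_rot. f_equal. ring.
Qed.

Definition conj (z : point) : point := (fst z, - snd z).

Lemma mod1 (L R s K : R) : s = 1 -> L - R = (s - 1) * K -> L = R.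
Proof. intros Hs H. rewrite Hs in H. lra. Qed.

Lemma inv_rot p c0 r z :
  inversion (rot p c0) r z = rot p (inversion c0 r (rot (- p) z)).
Proof.
  destruct z as [x y], c0 as [c1 c2]. unfold inversion, rot; cbn [fst snd].
  rewrite cos_neg, sin_neg.
  pose proof (sin2_cos2 p) as Q. unfold Rsqr in Q.
  assert (D : (cos p * x - - sin p * y - c1) ^ 2 + (- sin p * x + cos p * y - c2) ^ 2
            = (x - (cos p * c1 - sin p * c2)) ^ 2 + (y - (sin p * c1 + cos p * c2)) ^ 2).
  { nra. }
  rewrite D. set (k := r ^ 2 / _).
  apply pair_eq.
  - apply (mod1 _ _ _ (- (k * x)) Q). ring.
  - apply (mod1 _ _ _ (- (k * y)) Q). ring.
Qed.

Lemma refl_rot psi w : reflection psi w = rot (2 * psi) (conj w).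
Proof. destruct w. unfold reflection, rot, conj; simpl. apply pair_eq; ring. Qed.

Lemma conj_rot p w : conj (rot p w) = rot (- p) (conj w).
Proof. destruct w. unfold rot, conj; simpl. rewrite cos_neg, sin_neg. apply pair_eq; ring. Qed.

Lemma T_decomp g n z : (2 <= g)%Z ->
  T g n z = rot (IZR (sigma g n) * a g) (S g (rot (- (IZR n * a g)) z)).
Proof.
  intro H. unfold T. rewrite refl_rot. unfold icenter.
  rewrite inv_rot, conj_rot, rot_rot. rewrite !phi_a by exact H.
  replace (2 * ((IZR n * a g + IZR (sigma g n) * a g) / 2) + - (IZR n * a g))
    with (IZR (sigma g n) * a g) by field.
  f_equal.
Qed.

Definition dd (g : Z) (z : point) : R := cc g * cc g + 1 - 2 * cc g * fst z.

Lemma dd_pos g z : (2 <= g)%Z -> unit z -> 0 < dd g z.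
Proof.
  intros H U. destruct (cc_facts g H) as (C1 & _ & _). unfold dd, unit in *.
  destruct z as [x y]; cbn [fst snd] in *.
  assert (x <= 1) by nra. nra.
Qed.

Lemma S_formula g z : (2 <= g)%Z -> unit z ->
  S g z = ((2 * cc g - (cc g * cc g + 1) * fst z) / dd g z,
           - ((cc g * cc g - 1) * snd z) / dd g z).
Proof.
  intros H U. pose proof (dd_pos g z H U) as Dp.
  destruct (cc_facts g H) as (C1 & C2 & _).
  unfold S, inversion, dd, unit in *. destruct z as [x y]; cbn [fst snd] in *.
  assert (E : (x - cc g) ^ 2 + (y - 0) ^ 2 = cc g * cc g + 1 - 2 * cc g * x) by nra.
  rewrite E. replace (iradius g ^ 2) with (cc g * cc g - 1) by (rewrite <- C2; ring).
  apply pair_eq; field; lra.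
Qed.

Lemma S_unit g z : (2 <= g)%Z -> unit z -> unit (S g z).
Proof.
  intros H U. pose proof (dd_pos g z H U) as Dp. rewrite (S_formula g z H U).
  unfold unit, dd in *. destruct z as [x y]; cbn [fst snd] in *.
  set (c := cc g) in *.
  set (d := c * c + 1 - 2 * c * x) in *.
  assert (K : (2 * c - (c * c + 1) * x) * (2 * c - (c * c + 1) * x) + (c * c - 1) * y * ((c * c - 1) * y) = d * d).
  { apply (mod1 _ _ _ ((c*c - 1)^2) U). unfold d. ring. }
  cbn [fst snd].
  transitivity (((2 * c - (c * c + 1) * x) * (2 * c - (c * c + 1) * x) + (c * c - 1) * y * ((c * c - 1) * y)) / (d * d)).
  - field. lra.
  - rewrite K. field. lra.
Qed.

Lemma S_orient g u v w : (2 <= g)%Z -> unit u -> unit v -> unit w ->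
  0 < orient u v w -> 0 < orient (S g u) (S g v) (S g w).
Proof.
  intros H Uu Uv Uw O.
  pose proof (dd_pos g u H Uu). pose proof (dd_pos g v H Uv). pose proof (dd_pos g w H Uw).
  destruct (cc_facts g H) as (C1 & _ & _).
  rewrite (S_formula g u H Uu), (S_formula g v H Uv), (S_formula g w H Uw).
  unfold orient, cr, dd in *.
  destruct u as [x1 y1], v as [x2 y2], w as [x3 y3]; cbn [fst snd] in *.
  set (c := cc g) in *.
  set (d1 := c * c + 1 - 2 * c * x1) in *.
  set (d2 := c * c + 1 - 2 * c * x2) in *.
  set (d3 := c * c + 1 - 2 * c * x3) in *.
  set (o := x1 * y2 - y1 * x2 + (x2 * y3 - y2 * x3) + (x3 * y1 - y3 * x1)) in *.
  match goal with |- 0 < ?X => replace X with ((c * c - 1) ^ 3 * o / (d1 * d2 * d3)) end.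
  - assert (0 < c * c - 1) by nra.
    apply Rdiv_lt_0_compat.
    + apply Rmult_lt_0_compat; [apply pow_lt; lra | exact O].
    + apply Rmult_lt_0_compat; [apply Rmult_lt_0_compat|]; lra.
  - unfold o, d1, d2, d3 in *. field. repeat split; lra.
Qed.

Lemma rot_unit t z : unit z -> unit (rot t z).
Proof.
  intro U. unfold unit, rot in *. destruct z as [x y]; cbn [fst snd] in *.
  pose proof (sin2_cos2 t) as Q. unfold Rsqr in Q.
  transitivity (x * x + y * y); [|exact U]. apply (mod1 _ _ _ (x * x + y * y) Q). ring.
Qed.

Lemma rot_orient t u v w : orient (rot t u) (rot t v) (rot t w) = orient u v w.
Proof.
  unfold orient, cr, rot. destruct u as [x1 y1], v as [x2 y2], w as [x3 y3]; cbn [fst snd].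
  pose proof (sin2_cos2 t) as Q. unfold Rsqr in Q.
  apply (mod1 _ _ _ (x1 * y2 - y1 * x2 + (x2 * y3 - y2 * x3) + (x3 * y1 - y3 * x1)) Q). ring.
Qed.

Lemma T_unit g n z : (2 <= g)%Z -> unit z -> unit (T g n z).
Proof.
  intros H U. rewrite T_decomp by exact H. apply rot_unit, S_unit, rot_unit; assumption.
Qed.

Lemma T_orient g n u v w : (2 <= g)%Z -> unit u -> unit v -> unit w ->
  0 < orient u v w -> 0 < orient (T g n u) (T g n v) (T g n w).
Proof.
  intros H Uu Uv Uw O. rewrite !T_decomp by exact H. rewrite rot_orient.
  apply S_orient; try apply rot_unit; try assumption. rewrite rot_orient. exact O.
Qed.

Lemma T_mono g n t1 t t2 p1 p2 : (2 <= g)%Z ->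
  t1 < t < t2 -> t2 < t1 + 2 * PI ->
  T g n (e t1) = e p1 -> T g n (e t2) = e p2 -> 0 < p2 - p1 < 2 * PI ->
  exists p, T g n (e t) = e p /\ p1 < p < p2.
Proof.
  intros H B1 B2 E1 E2 B3.
  apply orient_angle; [apply T_unit, e_unit; exact H| |exact B3].
  rewrite <- E1, <- E2. apply T_orient; try apply e_unit; try exact H.
  apply orient_pos; lra.
Qed.

Lemma mod2 (L R r1 r2 K1 K2 : R) : r1 = 0 -> r2 = 0 -> L - R = r1 * K1 + r2 * K2 -> L = R.
Proof. intros H1 H2 H. rewrite H1, H2 in H. lra. Qed.

Lemma div_eq (N D X : R) : 0 < D -> N = X * D -> N / D = X.
Proof. intros. subst. field. lra. Qed.

Lemma S_formula_cb g z : (2 <= g)%Z -> unit z ->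
  S g z = ((2 * cb g - (1 + cb g * cb g) * fst z) / (1 + cb g * cb g - 2 * cb g * fst z),
           - ((1 - cb g * cb g) * snd z) / (1 + cb g * cb g - 2 * cb g * fst z)).
Proof.
  intros H U. pose proof (dd_pos g z H U) as Dp. rewrite (S_formula g z H U).
  destruct (cb_facts g H) as (E1 & P1 & L1 & E2 & P2).
  unfold dd, cc in *. 
  assert (0 < 1 + cb g * cb g - 2 * cb g * fst z).
  { replace (1 + cb g * cb g - 2 * cb g * fst z) with ((/ cb g * / cb g + 1 - 2 * / cb g * fst z) * (cb g * cb g)) by (field; lra).
    apply Rmult_lt_0_compat; nra. }
  apply pair_eq; field; split; lra.
Qed.

Lemma S_special g : (2 <= g)%Z ->
  S g (e (- bet g)) = e (bet g) /\ S g (e (bet g)) = e (- bet g) /\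
  S g (e (bet g - a g)) = e (bet g + a g) /\ S g (e (a g - bet g)) = e (- (a g + bet g)).
Proof.
  intro H. destruct (bet_facts g H) as (Cb & Sb & Bb).
  destruct (cb_facts g H) as (E1 & P1 & L1 & E2 & P2).
  destruct (cosa_bounds g H) as [[Ca1 Ca2] Sa].
  pose proof (sin2_cos2 (a g)) as Qa. unfold Rsqr in Qa.
  set (v := sin (a g)) in *.
  assert (R1 : sb g * sb g - (1 - cb g * cb g) = 0) by lra.
  assert (R2 : v * v - (1 - (cb g * cb g) * (cb g * cb g)) = 0) by (rewrite E1; lra).
  repeat split.
  - rewrite S_formula_cb by (exact H || apply e_unit). unfold e. cbn [fst snd].
    rewrite cos_neg, sin_neg, Cb, Sb.
    assert (0 < 1 - cb g * cb g) by nra.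
    apply pair_eq; field; lra.
  - rewrite S_formula_cb by (exact H || apply e_unit). unfold e. cbn [fst snd].
    rewrite cos_neg, sin_neg, Cb, Sb.
    assert (0 < 1 - cb g * cb g) by nra.
    apply pair_eq; field; lra.
  - pose proof (COS_bound (bet g - a g)) as CB.
    rewrite cos_minus, Cb, Sb, <- E1 in CB. fold v in CB.
    rewrite S_formula_cb by (exact H || apply e_unit). unfold e. cbn [fst snd].
    rewrite cos_minus, sin_minus, cos_plus, sin_plus, Cb, Sb, <- E1. fold v.
    assert (Dn : 0 < 1 + cb g * cb g - 2 * cb g * (cb g * (cb g * cb g) + sb g * v)).
    { nra. }
    apply pair_eq.
    + apply (Rmult_eq_reg_r (1 + cb g * cb g - 2 * cb g * (cb g * (cb g * cb g) + sb g * v))); [|lra].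
      unfold Rdiv. rewrite Rmult_assoc, Rinv_l, Rmult_1_r by lra.
      apply (mod2 _ _ _ _ (-2 * cb g * v * v) (-2 * cb g * (1 - cb g * cb g)) R1 R2). ring.
    + apply (Rmult_eq_reg_r (1 + cb g * cb g - 2 * cb g * (cb g * (cb g * cb g) + sb g * v))); [|lra].
      unfold Rdiv. rewrite Rmult_assoc, Rinv_l, Rmult_1_r by lra.
      apply (mod2 _ _ _ _ (2 * cb g * cb g * cb g * v) (2 * cb g * cb g * sb g) R1 R2). ring.
  - pose proof (COS_bound (a g - bet g)) as CB.
    rewrite cos_minus, Cb, Sb, <- E1 in CB. fold v in CB.
    rewrite S_formula_cb by (exact H || apply e_unit). unfold e. cbn [fst snd].
    rewrite cos_minus, sin_minus, cos_neg, sin_neg, cos_plus, sin_plus, Cb, Sb, <- E1. fold v.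
    apply pair_eq; apply div_eq; try nra.
    + apply (mod2 _ _ _ _ (-2 * cb g * v * v) (-2 * cb g * (1 - cb g * cb g)) R1 R2). ring.
    + apply (mod2 _ _ _ _ (-2 * cb g * cb g * cb g * v) (-2 * cb g * cb g * sb g) R1 R2). ring.
Qed.

Definition Sm (c : R) (z : C) : C := ((RtoC c * z - 1) / (z - RtoC c))%C.

Lemma rel_C (c : R) (W z : C) :
  W <> 0%C -> (z - RtoC c <> 0)%C -> (W * z - RtoC c <> 0)%C ->
  (W * Sm c (W * z) - RtoC c <> 0)%C -> (/ W * Sm c z - RtoC c <> 0)%C ->
  (RtoC c * RtoC c * W * W + RtoC c * RtoC c - 2 * W = 0)%C ->
  Sm c (W * Sm c (W * z)) = (/ W * Sm c (/ W * Sm c z))%C.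
Proof.
  intros HW H1 H2 H3 H4 E0. unfold Sm in *.
  set (cC := RtoC c) in *.
  assert (D1 : (cC * W * z * (W - 1) + cC * cC - W <> 0)%C).
  { intro h. apply H3. 
    replace (W * ((cC * (W * z) - 1) / (W * z - cC)) - cC)%C with ((cC * W * z * (W - 1) + cC * cC - W) / (W * z - cC))%C
      by (field; exact H2).
    rewrite h. field. exact H2. }
  assert (D2 : (cC * W * z * (1 - W) + cC * cC * W * W - W <> 0)%C).
  { intro h. apply H4. 
    replace (/ W * ((cC * z - 1) / (z - cC)) - cC)%C with ((cC * W * z * (1 - W) + cC * cC * W * W - W) / (W * W * (z - cC)))%C
      by (field; auto).
    rewrite h. field. auto. }
  transitivity ((z * (cC * cC * W * W - W) + cC * (1 - W)) / (cC * W * z * (W - 1) + cC * cC - W))%C.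
  { field. auto. }
  transitivity ((z * (cC * cC - W) + cC * (W - 1)) / (cC * W * z * (1 - W) + cC * cC * W * W - W))%C.
  2: { assert (D3 : (cC * z - 1 - cC * (W * (z - cC)))%C <> 0).
       { intro h. apply D2. transitivity (W * (cC * z - 1 - cC * (W * (z - cC))))%C; [ring|]. rewrite h. ring. }
       field. repeat split; auto. }
  assert (N : (z * (cC * cC * W * W - W) + cC * (1 - W) = - (z * (cC * cC - W) + cC * (W - 1)))%C).
  { transitivity (- (z * (cC * cC - W) + cC * (W - 1)) + z * (cC * cC * W * W + cC * cC - 2 * W))%C; [ring|]. rewrite E0. ring. }
  assert (D : (cC * W * z * (1 - W) + cC * cC * W * W - W = - (cC * W * z * (W - 1) + cC * cC - W))%C).
  { transitivity (- (cC * W * z * (W - 1) + cC * cC - W) + (cC * cC * W * W + cC * cC - 2 * W))%C; [ring|]. rewrite E0. ring. }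
  rewrite N, D. field. auto.
Qed.

Lemma unit_ne_c (c : R) z : 1 < c -> unit z -> (z - RtoC c)%C <> 0%C.
Proof.
  intros Hc U h. destruct z as [x y]. unfold unit in U; cbn [fst snd] in U.
  unfold Cminus, Cplus, Copp, RtoC in h. cbn in h. injection h as h1 h2. nra.
Qed.

Lemma S_mob g z : (2 <= g)%Z -> unit z -> S g z = Sm (cc g) z.
Proof.
  intros H U. destruct (cc_facts g H) as (C1 & C2 & _).
  pose proof (unit_ne_c (cc g) z C1 U) as Ne.
  unfold S, inversion, Sm. destruct z as [x y]. unfold unit in U; cbn [fst snd] in *.
  unfold Cdiv, Cinv, Cmult, Cminus, Cplus, Copp, RtoC. cbn [fst snd].
  assert (x <= 1) by nra. assert (Dp : 0 < (x - cc g) ^ 2 + (y - 0) ^ 2) by nra.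
  replace (iradius g ^ 2) with (cc g * cc g - 1) by (rewrite <- C2; ring).
  apply pair_eq; field; nra.
Qed.

Lemma rot_C t z : rot t z = ((cos t, sin t) * z)%C.
Proof. destruct z. unfold rot, Cmult. cbn [fst snd]. apply pair_eq; ring. Qed.

Lemma Winv t : (/ (cos t, sin t))%C = (cos (- t), sin (- t)).
Proof.
  unfold Cinv. cbn [fst snd]. rewrite cos_neg, sin_neg.
  pose proof (sin2_cos2 t) as Q. unfold Rsqr in Q.
  assert (E : cos t ^ 2 + sin t ^ 2 = 1) by nra. rewrite E. apply pair_eq; field.
Qed.

Lemma E0_lemma g : (2 <= g)%Z ->
  (RtoC (cc g) * RtoC (cc g) * (cos (a g), sin (a g)) * (cos (a g), sin (a g)) + RtoC (cc g) * RtoC (cc g)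
     - 2 * (cos (a g), sin (a g)) = 0)%C.
Proof.
  intro H. destruct (cc_facts g H) as (C1 & _ & C3).
  pose proof (sin2_cos2 (a g)) as Q. unfold Rsqr in Q.
  unfold Cmult, Cplus, Cminus, Copp, RtoC. cbn [fst snd].
  change (IZR 2) with 2. cbn [fst snd].
  unfold Cplus. cbn [fst snd].
  assert (R1 : sin (a g) * sin (a g) + cos (a g) * cos (a g) - 1 = 0) by lra.
  assert (R2 : cc g * cc g * cos (a g) - 1 = 0) by lra.
  apply pair_eq.
  - apply (mod2 _ _ _ _ (- (cc g * cc g)) (2 * cos (a g)) R1 R2). ring.
  - apply (mod2 _ _ _ _ 0 (2 * sin (a g)) R1 R2). ring.
Qed.

Lemma S_rel g w : (2 <= g)%Z -> unit w ->
  S g (rot (a g) (S g (rot (a g) w))) = rot (- a g) (S g (rot (- a g) (S g w))).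
Proof.
  intros H U. destruct (cc_facts g H) as (C1 & _ & _).
  destruct (cosa_bounds g H) as [[Ca1 Ca2] Sa].
  assert (U1 : unit (rot (a g) w)) by (apply rot_unit; exact U).
  assert (U2 : unit (S g (rot (a g) w))) by (apply S_unit; assumption).
  assert (U3 : unit (rot (a g) (S g (rot (a g) w)))) by (apply rot_unit; exact U2).
  assert (V1 : unit (S g w)) by (apply S_unit; assumption).
  assert (V2 : unit (rot (- a g) (S g w))) by (apply rot_unit; exact V1).
  pose proof (unit_ne_c _ _ C1 U) as N0.
  pose proof (unit_ne_c _ _ C1 U1) as N1.
  pose proof (unit_ne_c _ _ C1 U3) as N3.
  pose proof (unit_ne_c _ _ C1 V2) as N4.
  rewrite (S_mob g _ H U3), (S_mob g _ H U1), (S_mob g _ H V2), (S_mob g _ H U).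
  rewrite (S_mob g _ H U1) in N3. rewrite (S_mob g _ H U) in N4.
  rewrite !rot_C in *. rewrite <- !Winv in *.
  apply rel_C; try assumption.
  - intro h. injection h as h1 h2. lra.
  - apply E0_lemma. exact H.
Qed.

Lemma sigma_odd g k : Z.odd k = true -> sigma g k = (4 * g - k)%Z.
Proof. intro h. unfold sigma. rewrite h. reflexivity. Qed.
Lemma sigma_even g k : Z.odd k = false -> sigma g k = (2 - k)%Z.
Proof. intro h. unfold sigma. rewrite h. reflexivity. Qed.

Ltac par Hk := repeat (rewrite ?Z.odd_add, ?Z.odd_sub, ?Z.odd_mul, ?Z.odd_opp); rewrite ?Hk; reflexivity.

Ltac elim_sigma Hk := repeat match goal with
  | |- context [sigma ?g ?x] => first [ rewrite (sigma_odd g x) by par Hk | rewrite (sigma_even g x) by par Hk ]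
  end.

Lemma sigma_invol g k : sigma g (sigma g k) = k.
Proof.
  destruct (Z.odd k) eqn:Hk; elim_sigma Hk; lia.
Qed.

Lemma sigma_shift g k q : sigma g (k + Nz g * q) = (sigma g k - Nz g * q)%Z.
Proof.
  unfold Nz. destruct (Z.odd k) eqn:Hk; elim_sigma Hk; lia.
Qed.

Lemma idx g k :
  (exists q, sigma g (sigma g (sigma g k + 1) + 1) = sigma g (k - 1) - 1 + Nz g * q)%Z /\
  (exists q, sigma g (sigma g (sigma g (k - 1) - 1) - 1) = sigma g k + 1 + Nz g * q)%Z /\
  (exists q, sigma g (sigma g (k - 1) - 1) - 1 = sigma g (sigma g k + 1) + Nz g * q)%Z.
Proof.
  unfold Nz. destruct (Z.odd k) eqn:Hk; elim_sigma Hk;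
  (split; [|split]);
  first [ exists 1%Z; lia | exists (-1)%Z; lia | exists 0%Z; lia ].
Qed.

Lemma periodic {X : Type} (N : Z) (F : Z -> X) :
  (forall i, F (i + N)%Z = F i) -> forall q i, F (i + N * q)%Z = F i.
Proof.
  intros HF.
  assert (Hn : forall n : nat, forall i, F (i + N * Z.of_nat n)%Z = F i).
  { induction n as [|n IH]; intro i.
    - f_equal. lia.
    - replace (i + N * Z.of_nat (Datatypes.S n))%Z with ((i + N * Z.of_nat n) + N)%Z by lia.
      rewrite HF. apply IH. }
  intros q i. destruct (Z_le_gt_dec 0 q) as [h|h].
  - rewrite <- (Z2Nat.id q h). apply Hn.
  - rewrite <- (Hn (Z.to_nat (- q)) (i + N * q)%Z). f_equal. lia.
Qed.

Lemma rot_Z t (k : Z) z : rot (t + 2 * PI * IZR k) z = rot t z.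
Proof.
  destruct z as [x y].
  assert (E := e_Z t k). unfold e in E. injection E as E1 E2.
  unfold rot. cbn [fst snd]. rewrite E1, E2. reflexivity.
Qed.

Lemma T_shift1 g n z : (2 <= g)%Z -> T g (n + Nz g) z = T g n z.
Proof.
  intro H. rewrite !T_decomp by exact H.
  replace (sigma g (n + Nz g)) with (sigma g n - Nz g * 1)%Z by (rewrite <- sigma_shift; f_equal; lia).
  rewrite !minus_IZR, !plus_IZR, !mult_IZR, !Rmult_minus_distr_r, !Rmult_plus_distr_r.
  rewrite Rmult_1_r, (Na g H).
  replace (IZR (sigma g n) * a g - 2 * PI) with (IZR (sigma g n) * a g + 2 * PI * IZR (-1)) by ring.
  rewrite rot_Z.
  replace (- (IZR n * a g + 2 * PI)) with (- (IZR n * a g) + 2 * PI * IZR (-1)) by ring.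
  rewrite rot_Z. reflexivity.
Qed.

Lemma T_per g n q z : (2 <= g)%Z -> T g (n + Nz g * q)%Z z = T g n z.
Proof.
  intro H. apply (periodic (Nz g) (fun m => T g m z)). intro i. apply T_shift1. exact H.
Qed.

Lemma T_e g n th ps : (2 <= g)%Z -> S g (e (th - IZR n * a g)) = e ps ->
  T g n (e th) = e (ps + IZR (sigma g n) * a g).
Proof.
  intros H E. rewrite T_decomp by exact H. rewrite e_rot.
  replace (th + - (IZR n * a g)) with (th - IZR n * a g) by ring. rewrite E. apply e_rot.
Qed.

Lemma T_vals g n : (2 <= g)%Z ->
  T g n (e (IZR n * a g - a g + bet g)) = e (IZR (sigma g n) * a g + a g + bet g) /\
  T g n (e (IZR n * a g + bet g)) = e (IZR (sigma g n) * a g - bet g) /\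
  T g n (e (IZR n * a g + a g - bet g)) = e (IZR (sigma g n) * a g - a g - bet g).
Proof.
  intro H. destruct (S_special g H) as (S1 & S2 & S3 & S4).
  split; [|split].
  - rewrite (T_e g n _ (bet g + a g) H). f_equal; ring.
    rewrite <- S3. f_equal. f_equal. ring.
  - rewrite (T_e g n _ (- bet g) H). f_equal; ring.
    rewrite <- S2. f_equal. f_equal. ring.
  - rewrite (T_e g n _ (- (a g + bet g)) H). f_equal; ring.
    rewrite <- S4. f_equal. f_equal. ring.
Qed.

Lemma T_rel g k z : (2 <= g)%Z -> unit z ->
  T g (sigma g k + 1) (T g k z) = T g (sigma g (k - 1) - 1) (T g (k - 1) z).
Proof.
  intros H U.
  destruct (idx g k) as (_ & _ & [q3 Q3]).
  rewrite !T_decomp by exact H.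
  rewrite !rot_rot.
  replace (- (IZR (sigma g k + 1) * a g) + IZR (sigma g k) * a g) with (- a g) by (rewrite plus_IZR; ring).
  replace (- (IZR (sigma g (k - 1) - 1) * a g) + IZR (sigma g (k - 1)) * a g) with (a g) by (rewrite minus_IZR; ring).
  replace (- (IZR (k - 1) * a g)) with (a g + - (IZR k * a g)) by (rewrite minus_IZR; ring).
  rewrite <- (rot_rot (a g) (- (IZR k * a g)) z).
  set (w := rot (- (IZR k * a g)) z).
  assert (Uw : unit w) by (apply rot_unit; exact U).
  rewrite (S_rel g w H Uw). rewrite rot_rot.
  assert (Q4 : sigma g (sigma g (k - 1) - 1) = (sigma g (sigma g k + 1) + 1 + Nz g * q3)%Z) by lia.
  assert (E : IZR (sigma g (sigma g (k - 1) - 1)) * a g + - a g = IZR (sigma g (sigma g k + 1)) * a g + 2 * PI * IZR q3).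
  { rewrite Q4, !plus_IZR, mult_IZR. rewrite <- (Na g H). ring. }
  rewrite E, rot_Z. reflexivity.
Qed.

Lemma P_e g n : (2 <= g)%Z -> Ppt g n = e (IZR n * a g - bet g).
Proof.
  intro H. destruct (bet_facts g H) as (Cb & Sb & _).
  unfold Ppt. rewrite phi_a by exact H.
  replace (cb g, - sb g) with (e (- bet g)) by (unfold e; rewrite cos_neg, sin_neg, Cb, Sb; reflexivity).
  rewrite e_rot. f_equal. ring.
Qed.

Lemma Q_e g n : (2 <= g)%Z -> Qpt g n = e (IZR n * a g - a g + bet g).
Proof.
  intro H. destruct (bet_facts g H) as (Cb & Sb & _).
  unfold Qpt. rewrite phi_a by exact H.
  replace (cb g, sb g) with (e (bet g)) by (unfold e; rewrite Cb, Sb; reflexivity).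
  rewrite e_rot. f_equal. rewrite minus_IZR. ring.
Qed.

Theorem corollary4p2 (g : Z) (A : Z -> point) :
  (2 <= g)%Z ->
  (forall i : Z, A (i + Nz g)%Z = A i) ->
  (forall i : Z, in_oarc (Ppt g i) (Qpt g i) (A i)) ->
  (forall i : Z,
      in_oarc (Qpt g (rho g i)) (A (rho g i + 1)%Z) (T g i (A i)) /\
      in_oarc (A (theta g (i - 1))) (Ppt g (theta g (i - 1) + 1)) (T g (i - 1) (A i))) ->
  let B := fun i : Z => T g (sigma g (i - 1)) (A (sigma g (i - 1))) in
  let C := fun i : Z => T g (sigma g (i + 1)) (A (sigma g (i + 1) + 1)%Z) in
  forall i j : Z,
    ((sigma g (j + 1) - (sigma g (i - 1) - 1)) mod Nz g = 0)%Z ->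
    T g j (C j) = T g i (B i) /\
    in_carc (B (rho g i + 1)%Z) (C (theta g i)) (T g i (B i)) /\
    (forall x : point,
        in_carc (B (rho g i + 1)%Z) (C (theta g i)) x <->
        in_carc (B (rho g j)) (C (theta g j - 1)%Z) x).
Proof.
  intros Hg Aper Hin Hsc B C i j Hij.
  pose proof PI_RGT_0 as PIp.
  destruct (a_bounds g Hg) as [ap aPI].
  destruct (bet_facts g Hg) as (_ & _ & [bl bu]).
  assert (NN : (0 < Nz g)%Z) by (unfold Nz; lia).
  assert (Aper' : forall q n, A (n + Nz g * q)%Z = A n) by (apply periodic; exact Aper).
  assert (Tper : forall q n z, T g (n + Nz g * q)%Z z = T g n z) by (intros; apply T_per; exact Hg).
  assert (Bper : forall q n, B (n + Nz g * q)%Z = B n).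
  { intros q n. unfold B. replace (n + Nz g * q - 1)%Z with ((n - 1) + Nz g * q)%Z by lia.
    rewrite sigma_shift. replace (sigma g (n - 1) - Nz g * q)%Z with (sigma g (n - 1) + Nz g * (- q))%Z by lia.
    rewrite Tper, Aper'. reflexivity. }
  assert (Cper : forall q n, C (n + Nz g * q)%Z = C n).
  { intros q n. unfold C. replace (n + Nz g * q + 1)%Z with ((n + 1) + Nz g * q)%Z by lia.
    rewrite sigma_shift. replace (sigma g (n + 1) - Nz g * q)%Z with (sigma g (n + 1) + Nz g * (- q))%Z by lia.
    replace (sigma g (n + 1) + Nz g * - q + 1)%Z with ((sigma g (n + 1) + 1) + Nz g * (- q))%Z by lia.
    rewrite Tper, Aper'. reflexivity. }
  assert (Aang : forall n, exists t, A n = e t /\ IZR n * a g - bet g < t < IZR n * a g - a g + bet g).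
  { intro n. specialize (Hin n). rewrite P_e, Q_e in Hin by exact Hg.
    apply oarc_angle in Hin; [exact Hin|]. lra. }
  remember (sigma g (i - 1)) as k eqn:Hk.
  assert (Hi : i = (sigma g k + 1)%Z) by (rewrite Hk, sigma_invol; lia).
  clear Hk. subst i.
  apply Z.mod_divide in Hij; [|lia]. destruct Hij as [q Hq].
  assert (Hj : j = (sigma g (k - 1) - 1 + Nz g * (- q))%Z).
  { assert (E1 : sigma g (j + 1) = (k - 1 + Nz g * q)%Z) by lia.
    assert (E2 : (j + 1 = sigma g (k - 1) - Nz g * q)%Z)
      by (rewrite <- (sigma_invol g (j + 1)), E1, sigma_shift; reflexivity).
    lia. }
  subst j.
  assert (Uk : unit (A k)) by (destruct (Aang k) as [t [-> _]]; apply e_unit).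
  pose proof (T_rel g k (A k) Hg Uk) as Rel.
  destruct (idx g k) as ([q1 Q1] & [q2 Q2] & [q3 Q3]).
  destruct (Hsc k) as [H1 H2].
  unfold rho in H1. unfold theta in H2.
  set (i := (sigma g k + 1)%Z) in *.
  set (j0 := (sigma g (k - 1) - 1)%Z) in *.
  assert (Hi : i = (sigma g k + 1)%Z) by reflexivity.
  assert (Hj0 : j0 = (sigma g (k - 1) - 1)%Z) by reflexivity.
  clearbody i j0.
  assert (EBi : B i = T g k (A k)).
  { unfold B. replace (i - 1)%Z with (sigma g k) by lia. rewrite sigma_invol. reflexivity. }
  assert (ECj0 : C j0 = T g (k - 1) (A k)).
  { unfold C. replace (j0 + 1)%Z with (sigma g (k - 1)) by lia. rewrite sigma_invol.
    replace (k - 1 + 1)%Z with k by lia. reflexivity. }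
  assert (EB1 : B (rho g i + 1)%Z = T g j0 (A j0)).
  { unfold B, rho. replace (sigma g i + 1 + 1 - 1)%Z with (sigma g i + 1)%Z by lia.
    rewrite Q1, Tper, Aper'. reflexivity. }
  assert (EB2 : B (rho g (j0 + Nz g * - q)) = T g j0 (A j0)).
  { unfold rho. rewrite sigma_shift.
    replace (sigma g j0 - Nz g * - q + 1)%Z with ((sigma g j0 + 1) + Nz g * q)%Z by lia.
    rewrite Bper. unfold B. replace (sigma g j0 + 1 - 1)%Z with (sigma g j0) by lia.
    rewrite sigma_invol. reflexivity. }
  assert (EC1 : C (theta g i) = T g i (A (i + 1)%Z)).
  { unfold C, theta. replace (sigma g i - 1 + 1)%Z with (sigma g i) by lia.
    rewrite sigma_invol. reflexivity. }
  assert (EC2 : C (theta g (j0 + Nz g * - q) - 1)%Z = T g i (A (i + 1)%Z)).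
  { unfold theta. rewrite sigma_shift.
    replace (sigma g j0 - Nz g * - q - 1 - 1)%Z with ((sigma g j0 - 2) + Nz g * q)%Z by lia.
    rewrite Cper. unfold C. replace (sigma g j0 - 2 + 1)%Z with (sigma g j0 - 1)%Z by lia.
    rewrite Q2. replace (i + Nz g * q2 + 1)%Z with ((i + 1) + Nz g * q2)%Z by lia.
    rewrite Tper, Aper'. reflexivity. }
  split.
  { rewrite Tper, Cper, ECj0, EBi. symmetry. exact Rel. }
  split.
  2: { intro x. rewrite EB1, EB2, EC1, EC2. tauto. }
  rewrite EBi, EB1, EC1.
  assert (Q3R : IZR (sigma g j0) * a g = IZR (sigma g i) * a g + a g + 2 * PI * IZR q3).
  { replace (sigma g j0) with (sigma g i + 1 + Nz g * q3)%Z by lia.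
    rewrite !plus_IZR, mult_IZR, <- (Na g Hg). ring. }
  destruct (Aang (i + 1)%Z) as [ti1 [Ai1 Bi1]]. rewrite plus_IZR, Rmult_plus_distr_r, Rmult_1_l in Bi1.
  destruct (Aang j0) as [tj [Aj Bj]].
  destruct (Aang (sigma g j0 + 1 + 1)%Z) as [tr1 [Ar1 Br1]].
  rewrite !plus_IZR, !Rmult_plus_distr_r, !Rmult_1_l in Br1.
  rewrite Q_e, Ai1 in H1 by exact Hg.
  apply oarc_angle in H1; [|lra]. destruct H1 as [bb [Ebb Bbb]].
  destruct (T_vals g i Hg) as (TQ & TQ1 & TP1).
  destruct (T_mono g i (IZR i * a g + a g - bet g) ti1 (IZR i * a g + bet g)
     (IZR (sigma g i) * a g - a g - bet g) (IZR (sigma g i) * a g - bet g) Hg) as [cc0 [Ecc Bcc]];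
    try lra; try assumption.
  destruct (T_mono g i (IZR i * a g - a g + bet g) bb ti1
     (IZR (sigma g i) * a g + a g + bet g) (cc0 + 2 * PI) Hg) as [y1 [Ey1 By1]];
    try lra; try assumption.
  { rewrite e_2PI. exact Ecc. }
  rewrite P_e, Aj in H2 by exact Hg. rewrite plus_IZR, Rmult_plus_distr_r, Rmult_1_l in H2.
  apply oarc_angle in H2; [|lra]. destruct H2 as [ww [Eww Bww]].
  destruct (Hsc j0) as [H3 _]. unfold rho in H3.
  rewrite Q_e, Ar1, Aj in H3 by exact Hg. rewrite plus_IZR, Rmult_plus_distr_r, Rmult_1_l in H3.
  apply oarc_angle in H3; [|lra]. destruct H3 as [b1 [Eb1 Bb1]].
  destruct (T_vals g j0 Hg) as (_ & _ & TPj).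
  destruct (T_mono g j0 tj ww (IZR j0 * a g + a g - bet g)
     b1 (IZR (sigma g j0) * a g - a g - bet g + 2 * PI) Hg) as [y2 [Ey2 By2]];
    try lra; try assumption.
  { rewrite e_2PI. exact TPj. }
  assert (Y1 : T g i (T g k (A k)) = e y1) by (rewrite Ebb; exact Ey1).
  assert (Y2 : T g i (T g k (A k)) = e (y2 - 2 * PI * IZR q3)).
  { rewrite Rel, Eww, Ey2. replace (y2 - 2 * PI * IZR q3) with (y2 + 2 * PI * IZR (- q3)) by (rewrite opp_IZR; ring).
    symmetry. apply e_Z. }
  assert (Ey : y1 = y2 - 2 * PI * IZR q3).
  { apply e_inj_small. rewrite <- Y1, <- Y2. reflexivity. lra. }
  rewrite Y1, Ai1, Ecc, Aj, Eb1.
  replace (e b1) with (e (b1 - 2 * PI * IZR q3))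
    by (replace (b1 - 2 * PI * IZR q3) with (b1 + 2 * PI * IZR (- q3)) by (rewrite opp_IZR; ring); apply e_Z).
  rewrite <- (e_2PI cc0).
  apply carc_angle; lra.
Qed.
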